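(* For every integer $n\geq 0$ (with $5n-1\ge0$ in the case of the minus sign), \[ \overline{p}\big(5^3(5n\pm1)\big)\equiv 0 \pmod{5}. \]
   Context: An overpartition of a nonnegative integer $n$ is a partition of $n$ in which the first occurrence of each distinct part may be overlined. $\overline{p}(n)$ denotes the number of overpartitions of $n$, with $\overline{p}(0)=1$; equivalently $\sum_{n\ge0}\overline{p}(n)q^n=\prod_{k\ge1}\frac{1+q^k}{1-q^k}$. *)

(* Defs.v *)
From mathcomp Require Import all_boot.
Set Implicit Arguments. Unset Strict Implicit. Unset Printing Implicit Defensive.

(* An overpartition of n is encoded by its data part-by-part: for each part
   size k+1 (k : 'I_n, so sizes 1..n) a multiplicity m k (< n+1) and a flag
   b k telling whether the first occurrence of that part is overlined.  This is a
   bijective encoding of overpartitions of n (a partition is a multiset of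
   positive parts; each distinct part may have its first occurrence
   overlined). *)
Definition is_overpartition (n : nat) (f : {ffun 'I_n -> 'I_n.+1 * bool}) : bool :=
  ((\sum_(k < n) (k.+1) * (f k).1) == n) &&
  [forall k, (f k).2 ==> (0 < (f k).1)].

Definition overpartition_count (n : nat) : nat :=
  #|[pred f : {ffun 'I_n -> 'I_n.+1 * bool} | is_overpartition f]|.

(* Main.v *)
Require Import Defs.
From mathcomp Require Import all_boot all_order all_algebra.
From mathcomp Require Import ring zify.
From Stdlib Require Import Lia.
Set Implicit Arguments. Unset Strict Implicit. Unset Printing Implicit Defensive.
Import GRing.Theory.
Local Open Scope ring_scope.

Section Eqm.
Variable R : comNzRingType.
Implicit Types p q r u : {poly R}.

Definition eqm (N : nat) p q := forall i, (i <= N)%N -> p`_i = q`_i.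

Lemma eqm_refl N p : eqm N p p. Proof. by []. Qed.
Lemma eqm_sym N p q : eqm N p q -> eqm N q p.
Proof. by move=> h i hi; rewrite h. Qed.
Lemma eqm_trans N p q r : eqm N p q -> eqm N q r -> eqm N p r.
Proof. by move=> h1 h2 i hi; rewrite h1 // h2. Qed.
Lemma eqmD N p q p' q' : eqm N p q -> eqm N p' q' -> eqm N (p + p') (q + q').
Proof. by move=> h1 h2 i hi; rewrite !coefD h1 // h2. Qed.
Lemma eqmN N p q : eqm N p q -> eqm N (- p) (- q).
Proof. by move=> h i hi; rewrite !coefN h. Qed.
Lemma eqmB N p q p' q' : eqm N p q -> eqm N p' q' -> eqm N (p - p') (q - q').
Proof. by move=> h1 h2; apply: eqmD => //; apply: eqmN. Qed.
Lemma eqmMl N r p q : eqm N p q -> eqm N (r * p) (r * q).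
Proof.
move=> h i hi; rewrite !coefM; apply: eq_bigr => j _; rewrite h //.
by apply: leq_trans (leq_subr _ _) hi.
Qed.
Lemma eqmMr N r p q : eqm N p q -> eqm N (p * r) (q * r).
Proof. by move=> h; rewrite ![_ * r]mulrC; apply: eqmMl. Qed.
Lemma eqmM N p q p' q' : eqm N p q -> eqm N p' q' -> eqm N (p * p') (q * q').
Proof. by move=> h1 h2; apply: eqm_trans (eqmMr _ h1) (eqmMl _ h2). Qed.
Lemma eqmX N p q k : eqm N p q -> eqm N (p ^+ k) (q ^+ k).
Proof. by move=> h; elim: k => [|k ih]; rewrite ?expr0 // !exprS; apply: eqmM. Qed.
Lemma eqm_le M N p q : (M <= N)%N -> eqm N p q -> eqm M p q.
Proof. by move=> hMN h i hi; apply: h; apply: leq_trans hMN. Qed.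
Lemma eqmXn e M p q : eqm M p q -> eqm (e + M) ('X^e * p) ('X^e * q).
Proof.
move=> h i hi; rewrite !coefXnM; case: ltnP => // hei; apply: h; lia.
Qed.
Lemma eqm_Xn0 N e p : (N < e)%N -> eqm N ('X^e * p) 0.
Proof. move=> he i hi; rewrite coefXnM coef0; case: ltnP => //; lia. Qed.
Lemma eqm_1Xn N e : (N < e)%N -> eqm N (1 - 'X^e) 1.
Proof.
move=> he; have := eqmB (eqm_refl (N:=N) (1 : {poly R})) (eqm_Xn0 (1 : {poly R}) he).
by rewrite mulr1 subr0.
Qed.
Lemma eqm_cancel N u p q : u`_0 = 1 -> eqm N (u * p) (u * q) -> eqm N p q.
Proof.
move=> u0 h.
have hr : eqm N ((p - q) * u) 0.
  move=> i hi; rewrite coef0 mulrBl coefB mulrC (mulrC q u) h //; exact: subrr.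
suff : forall i, (i <= N)%N -> (p - q)`_i = 0.
  by move=> H i hi; apply/eqP; rewrite -subr_eq0 -coefB H.
elim/ltn_ind => i ih hi.
have := hr i hi; rewrite coef0 coefM big_ord_recr /= subnn u0 mulr1.
rewrite big1 ?add0r // => j _; rewrite ih ?mul0r //.
by apply: leq_trans (ltnW (ltn_ord j)) hi.
Qed.
Lemma eqm_prod1 N (I : Type) (r : seq I) (P : pred I) (F : I -> {poly R}) :
  (forall i, P i -> eqm N (F i) 1) -> eqm N (\prod_(i <- r | P i) F i) 1.
Proof.
move=> h; apply: (big_ind (fun x => eqm N x 1)) => //.
by move=> x y hx hy; rewrite -(mulr1 1); apply: eqmM.
Qed.
Lemma eqm_prod N (I : Type) (r : seq I) (P : pred I) (F G : I -> {poly R}) :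
  (forall i, P i -> eqm N (F i) (G i)) ->
  eqm N (\prod_(i <- r | P i) F i) (\prod_(i <- r | P i) G i).
Proof.
move=> h; apply: (big_ind2 (fun x y => eqm N x y)) => //.
by move=> x1 x2 y1 y2 hx hy; apply: eqmM.
Qed.
End Eqm.
Lemma eqm_sum (R : comNzRingType) N (I : Type) (r : seq I) (P : pred I) (F G : I -> {poly R}) :
  (forall i, P i -> eqm N (F i) (G i)) ->
  eqm N (\sum_(i <- r | P i) F i) (\sum_(i <- r | P i) G i).
Proof.
move=> h; apply: (big_ind2 (fun x y => eqm N x y)) => //.
by move=> x1 x2 y1 y2 hx hy; apply: eqmD.
Qed.
Lemma eqm_eq (R : comNzRingType) N (p q : {poly R}) : p = q -> eqm N p q.
Proof. by move=> ->. Qed.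

Section QBin.
Variable S : comNzRingType.
Variable Q : S.

Fixpoint qbin (m k : nat) : S :=
  match m, k with
  | 0, 0 => 1
  | 0, _ => 0
  | m'.+1, 0 => 1
  | m'.+1, k'.+1 => qbin m' k'.+1 + Q ^+ (m' - k') * qbin m' k'
  end.

Lemma qbin_gt m k : (m < k)%N -> qbin m k = 0.
Proof.
elim: m k => [|m ih] [|k] //= hk.
by rewrite !ih ?mulr0 ?addr0 // ltnW.
Qed.

Lemma qbin0 m : qbin m 0 = 1. Proof. by case: m. Qed.

Definition qp (t : nat) : S := \prod_(i < t) (1 - Q ^+ i.+1).

Lemma qpS t : qp t.+1 = qp t * (1 - Q ^+ t.+1).
Proof. by rewrite /qp big_ord_recr. Qed.

Lemma qbin_prod m k : (k <= m)%N -> qp k * qp (m - k) * qbin m k = qp m.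
Proof.
elim: m k => [|m ih] [|k] //= hk.
- by rewrite /qp !big_ord0 !mul1r.
- by rewrite subn0 /qp big_ord0 !mul1r mulr1.
rewrite subSS mulrDr.
have E2 : qp k.+1 * qp (m - k) * (Q ^+ (m - k) * qbin m k)
          = Q ^+ (m - k) * (1 - Q ^+ k.+1) * qp m.
  by rewrite -(ih k hk) qpS; ring.
rewrite E2.
case: (ltnP k m) => hkm.
- have E1 : qp k.+1 * qp (m - k) * qbin m k.+1 = (1 - Q ^+ (m - k)) * qp m.
    rewrite -(ih k.+1 hkm).
    have -> : (m - k = (m - k.+1).+1)%N by lia.
    rewrite [qp (_ - _).+1]qpS; ring.
  rewrite E1 qpS.
  have -> : Q ^+ (m - k) * (1 - Q ^+ k.+1) = Q ^+ (m - k) - Q ^+ m.+1.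
    by rewrite mulrBr mulr1 -exprD; congr (_ - Q ^+ _); lia.
  ring.
- have hk' : k = m by apply/eqP; rewrite eqn_leq hkm -ltnS hk.
  subst k; rewrite qbin_gt // mulr0 add0r subnn expr0 mul1r qpS; ring.
Qed.

Variables x y : S.
Definition ccoef (m k : nat) : S :=
  Q ^+ 'C(k, 2) * qbin m k * y ^+ k * x ^+ (m - k).

Lemma cauchy m :
  \prod_(i < m) (x + y * Q ^+ i) = \sum_(k < m.+1) ccoef m k.
Proof.
elim: m => [|m ih].
  by rewrite big_ord0 big_ord1 /ccoef /= !expr0 !mul1r.
rewrite big_ord_recr /= ih mulrDr !mulr_suml.
rewrite (big_ord_recl m.+1) /=.
have -> : \sum_(i < m.+1) ccoef m.+1 (bump 0 i) =
   \sum_(i < m.+1) (Q ^+ 'C(i.+1, 2) * qbin m i.+1 * y ^+ i.+1 * x ^+ (m - i))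
 + \sum_(i < m.+1) (ccoef m i * (y * Q ^+ m)).
  rewrite -big_split; apply: eq_bigr => i _ /=.
  rewrite /ccoef /= subSS binS bin1 exprD.
  rewrite /bump /= add0n.
  have hE : Q ^+ m = Q ^+ i * Q ^+ (m - i) by rewrite -exprD subnKC // -ltnS.
  rewrite hE add1n exprS; ring.
rewrite addrA; congr (_ + _).
rewrite [in RHS]big_ord_recr /= qbin_gt // mulr0 !mul0r addr0.
rewrite big_ord_recl /= /ccoef subn0 qbin0 !expr0 !mul1r subn0.
rewrite -exprSr; congr (_ + _); apply: eq_bigr => i _ /=.
rewrite /bump /= add1n.
have hi := ltn_ord i.
have -> : (m - i = (m - i.+1).+1)%N by lia.
rewrite [x ^+ (_ - _).+1]exprS; ring.
Qed.
End QBin.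

Definition dd (k n : nat) : nat := (k - n + (n - k))%N.

Lemma bin2_2 (k : nat) : (2 * 'C(k, 2) = k * (k - 1))%N.
Proof.
elim: k => [|k ih] //; rewrite binS bin1 mulnDr ih.
case: k {ih} => // k; rewrite subn1 /=; nia.
Qed.

Lemma expo_id n k : (k <= n + n)%N ->
  (2 * 'C(k, 2) + (n + n).-1 * (n + n - k) = dd k n ^ 2 + (3 * n - 2) * n)%N.
Proof.
rewrite bin2_2 /dd => hk; case: (leqP k n) => hkn.
- have [t ->] : exists t, n = (k + t)%N by exists (n - k)%N; lia.
  have -> : (k + t + (k + t) - k = k + t + t)%N by lia.
  have -> : (k - (k + t) + (k + t - k) = t)%N by lia.
  case: k {hk hkn} => [|k].
    case: t => [|t] //.
    have -> : (0 + t.+1 + (0 + t.+1)).-1 = (t + t + 1)%N by lia.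
    have -> : (3 * (0 + t.+1) - 2 = 3 * t + 1)%N by lia.
    rewrite !add0n; ring.
  have -> : (k.+1 + t + (k.+1 + t)).-1 = (k + t + k + t + 1)%N by lia.
  have -> : (3 * (k.+1 + t) - 2 = 3 * (k + t) + 1)%N by lia.
  rewrite subn1 /=; ring.
- have [t ek] : exists t, k = (n + t)%N by exists (k - n)%N; lia.
  have [s en] : exists s, n = (t + s)%N by exists (n - t)%N; lia.
  rewrite ek en {ek en hk hkn}.
  have -> : (t + s + (t + s) - (t + s + t) = s)%N by lia.
  have -> : (t + s + t - (t + s) + (t + s - (t + s + t)) = t)%N by lia.
  case: s => [|s].
    case: t => [|t] //.
    have -> : (t.+1 + 0 + (t.+1 + 0)).-1 = (t + t + 1)%N by lia.
    have -> : (3 * (t.+1 + 0) - 2 = 3 * t + 1)%N by lia.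
    have -> : (t.+1 + 0 + t.+1 - 1 = t + t + 1)%N by lia.
    ring.
  have -> : (t + s.+1 + (t + s.+1)).-1 = (t + s + t + s + 1)%N by lia.
  have -> : (3 * (t + s.+1) - 2 = 3 * (t + s) + 1)%N by lia.
  have -> : (t + s.+1 + t - 1 = t + s + t)%N by lia.
  ring.
Qed.

Lemma prod_const_ord (T : comNzRingType) n (x : T) : \prod_(i < n) x = x ^+ n.
Proof. by elim: n => [|n ih]; rewrite ?big_ord0 // big_ord_recr ih exprSr. Qed.

Section GaussFin.
Variable R : idomainType.
Local Notation P := {poly R}.

Definition Opoly n : P := \prod_(j < n) (1 - 'X^((2 * j).+1)%N).
Definition TS n : P :=
  \sum_(k < (n + n).+1) (-1) ^+ (k + n) * 'X^(dd k n ^ 2) * qbin ('X^2) (n + n) k.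

Lemma negXprod n : \prod_(i < n) (- ('X^(2 * i) : P)) = (-1) ^+ n * 'X^(n * (n - 1)).
Proof.
elim: n => [|n ih]; first by rewrite big_ord0 expr0 mul1r.
rewrite big_ord_recr /= ih.
have -> : (n.+1 * (n.+1 - 1) = n * (n - 1) + 2 * n)%N.
  case: n {ih} => // n; rewrite subn1 /= subn1 /=; ring.
rewrite exprD exprS; ring.
Qed.

Lemma Opoly_rev n : Opoly n = \prod_(i < n) (1 - 'X^((2 * (n - i.+1)).+1)).
Proof. by rewrite /Opoly (reindex_inj rev_ord_inj). Qed.

Lemma lhs_fact n :
  \prod_(i < n + n) ('X^((n + n).-1) + (-1) * ('X^2 : P) ^+ i)
  = (-1) ^+ n * 'X^((3 * n - 2) * n) * Opoly n ^+ 2.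
Proof.
rewrite big_split_ord /=.
have E1 : \prod_(i < n) ('X^((n + n).-1) + (-1) * ('X^2 : P) ^+ (lshift n i))
   = \prod_(i < n) (- 'X^(2 * i)) * Opoly n.
  rewrite Opoly_rev -big_split /=.
  apply: eq_bigr => i _ /=.
  rewrite -exprM mulN1r mulNr mulrBr mulr1 -exprD opprB addrC.
  rewrite addrC; congr ('X^_ - _).
  have := ltn_ord i; lia.
have E2 : \prod_(i < n) ('X^((n + n).-1) + (-1) * ('X^2 : P) ^+ (rshift n i))
   = ('X^((n + n).-1)) ^+ n * Opoly n.
  rewrite /Opoly -(prod_const_ord n ('X^((n + n).-1))) -big_split /=.
  apply: eq_bigr => i _ /=.
  rewrite -exprM mulN1r mulrBr mulr1 -exprD.
  congr (_ - 'X^_).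
  have := ltn_ord i; lia.
rewrite E1 E2 negXprod -exprM.
have -> : ('X^((3 * n - 2) * n) : P) = 'X^(n * (n - 1)) * 'X^((n + n).-1 * n).
  rewrite -exprD; congr 'X^_.
  case: n {E1 E2} => // n; rewrite subn1 /=.
  have -> : (3 * n.+1 - 2 = 3 * n + 1)%N by lia.
  ring.
ring.
Qed.

Lemma gauss_fin n : Opoly n ^+ 2 = TS n.
Proof.
have C := cauchy ('X^2 : P) ('X^((n + n).-1)) (-1) (n + n).
rewrite lhs_fact in C.
have C2 : \sum_(k < (n + n).+1) ccoef ('X^2 : P) ('X^((n + n).-1)) (-1) (n + n) k
   = 'X^((3 * n - 2) * n) * ((-1) ^+ n * TS n).
  rewrite /TS mulr_sumr mulr_sumr; apply: eq_bigr => k _.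
  rewrite /ccoef -!exprM exprD.
  have hk : (k <= n + n)%N by have := ltn_ord k; lia.
  have E : ('X^(2 * 'C(k, 2)) * 'X^((n + n).-1 * (n + n - k)) : P) =
           'X^((3 * n - 2) * n) * 'X^(dd k n ^ 2).
    by rewrite -!exprD expo_id // addnC.
  have -> : ('X^(2 * 'C(k, 2)) : P) * qbin ('X^2) (n + n) k * (-1) ^+ k *
     'X^((n + n).-1 * (n + n - k)) =
     ('X^(2 * 'C(k, 2)) * 'X^((n + n).-1 * (n + n - k))) * qbin ('X^2) (n + n) k * (-1) ^+ k
    by ring.
  have hsq : ((-1) ^+ n * (-1) ^+ n : P) = 1.
    by rewrite -exprD -signr_odd oddD addbb.
  rewrite E.
  set L := (X in X = _).
  transitivity (L * ((-1) ^+ n * (-1) ^+ n)); first by rewrite hsq mulr1.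
  rewrite /L; ring.
rewrite C2 in C.
have hX : ('X^((3 * n - 2) * n) : P) != 0 by apply: monic_neq0; apply: monicXn.
have C3 : (-1) ^+ n * Opoly n ^+ 2 = (-1) ^+ n * TS n.
  by apply: (mulfI hX); rewrite -C; ring.
have hsq : ((-1) ^+ n * (-1) ^+ n : P) = 1.
  by rewrite -exprD -signr_odd oddD addbb.
have := congr1 (fun z => (-1) ^+ n * z) C3.
by rewrite /= !mulrA hsq !mul1r.
Qed.
End GaussFin.

Section ThetaLim.
Variable R : idomainType.
Local Notation P := {poly R}.

Definition theta n : P := \sum_(k < (n + n).+1) (-1) ^+ (k + n) * 'X^(dd k n ^ 2).

Lemma qp_eqm s t : (s <= t)%N -> eqm (2 * s + 1) (qp ('X^2 : P) t) (qp 'X^2 s).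
Proof.
elim: t => [|t ih] hst; first by have -> : s = 0%N by lia.
case: (ltnP s t.+1) => h; last by have -> : s = t.+1 by lia.
rewrite qpS -[X in eqm _ _ X]mulr1; apply: eqmM; first by apply: ih.
rewrite -exprM; apply: eqm_1Xn; lia.
Qed.

Lemma qp_coef0 s : (qp ('X^2 : P) s)`_0 = 1.
Proof.
have h : eqm 0 (qp ('X^2 : P) s) 1.
  by apply: eqm_prod1 => i _; rewrite -exprM; apply: eqm_1Xn; lia.
by rewrite (h 0%N) // coef1.
Qed.

Lemma qbinL m k s t : (k <= m)%N -> (s <= k)%N -> (s <= m - k)%N -> (s <= t)%N ->
  eqm (2 * s + 1) (qbin ('X^2 : P) m k * qp 'X^2 t) 1.
Proof.
move=> hkm hsk hsmk hst.
set u := qp ('X^2 : P) s.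
have h1 : eqm (2 * s + 1) (u * (qbin 'X^2 m k * u)) (u * 1).
  rewrite mulr1.
  apply: (@eqm_trans _ _ _ (qp 'X^2 k * qp 'X^2 (m - k) * qbin 'X^2 m k)).
    have -> : u * (qbin 'X^2 m k * u) = u * u * qbin 'X^2 m k by ring.
    by apply: eqmMr; apply: eqmM; apply: eqm_sym; apply: qp_eqm.
  by rewrite qbin_prod //; apply: qp_eqm; lia.
have h2 := eqm_cancel (qp_coef0 s) h1.
apply: eqm_trans h2; apply: eqmMl; apply: qp_eqm => //.
Qed.

Lemma theta_eqm n : eqm n (Opoly R n ^+ 2 * qp 'X^2 n) (theta n).
Proof.
rewrite gauss_fin /TS /theta mulr_suml; apply: eqm_sum => k _.
have hk := ltn_ord k.
rewrite -!mulrA; apply: eqmMl.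
set d := dd k n.
have hd : (d <= n)%N by rewrite /d /dd; lia.
have H := eqmXn (e := (d ^ 2)%N) (qbinL (m := (n + n)%N) (k := k) (s := (n - d)%N) (t := n) _ _ _ _).
rewrite mulr1 in H; apply: (eqm_le _ (H _ _ _ _)); rewrite /d /dd; try lia.
have -> : ((k - n + (n - k)) ^ 2 = (k - n + (n - k)) * (k - n + (n - k)))%N by rewrite expnS expn1.
nia.
Qed.
End ThetaLim.

Section Over.
Variable R : idomainType.
Local Notation P := {poly R}.

Definition Cp N : P := \prod_(k < N) (1 - 'X^(k.+1)).
Definition Sk N k : P := \sum_(m < N.+1) 'X^(k * m).
Definition Pp N : P := \prod_(k < N) (1 + 'X^(k.+1)).
Definition Sp N : P := \prod_(k < N) Sk N k.+1.
Definition gk N (k : nat) : P :=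
  \sum_(t : 'I_N.+1 * bool) (if t.2 ==> (0 < t.1)%N then 'X^(k.+1 * t.1) else 0).
Definition G N : P := \prod_(k < N) gk N k.

Lemma OD_C N : Opoly R N * qp ('X^2 : P) N = Cp (N + N).
Proof.
elim: N => [|N ih]; first by rewrite /Opoly /qp /Cp !big_ord0 mulr1.
rewrite /Opoly big_ord_recr qpS /= -/(Opoly R N).
have -> : (N.+1 + N.+1 = (N + N).+2)%N by lia.
rewrite /Cp 2!big_ord_recr /= -/(Cp (N + N)) -ih -exprM.
have -> : ((N + N).+2 = 2 * N.+1)%N by lia.
have -> : ((N + N).+1 = (2 * N).+1)%N by lia.
ring.
Qed.

Lemma PC_D N : Pp N * Cp N = qp ('X^2 : P) N.
Proof.
rewrite /Pp /Cp /qp -big_split; apply: eq_bigr => k _ /=.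
by rewrite -exprM mulnC exprM; ring.
Qed.

Lemma geom k M : (1 - 'X^k) * \sum_(m < M.+1) ('X^(k * m) : P) = 1 - 'X^(k * M.+1).
Proof.
elim: M => [|M ih]; first by rewrite big_ord1 muln0 expr0 mulr1 muln1.
rewrite big_ord_recr /= mulrDr ih.
have -> : (k * M.+2 = k * M.+1 + k)%N by rewrite mulnS addnC.
rewrite exprD; ring.
Qed.

Lemma CS_1 N : eqm N (Cp N * Sp N) 1.
Proof.
rewrite /Cp /Sp -big_split /=; apply: eqm_prod1 => k _.
rewrite /Sk geom; apply: eqm_1Xn; nia.
Qed.

Lemma C_stab N M : eqm N (Cp (N + M)) (Cp N).
Proof.
elim: M => [|M ih]; first by rewrite addn0.
rewrite addnS /Cp big_ord_recr /= -/(Cp (N + M)) -[X in eqm _ _ X]mulr1.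
apply: eqmM => //; apply: eqm_1Xn; lia.
Qed.

Lemma gk_eqm N k : eqm N (gk N k) ((1 + 'X^(k.+1)) * Sk N k.+1).
Proof.
have -> : gk N k = \sum_(m < N.+1) 'X^(k.+1 * m) + \sum_(m < N) 'X^(k.+1 * m.+1).
  rewrite /gk -(pair_bigA _ (fun (m : 'I_N.+1) (b : bool) =>
      if b ==> (0 < m)%N then ('X^(k.+1 * m) : P) else 0)) /=.
  under eq_bigr do rewrite big_bool /=.
  rewrite big_split /= addrC; congr (_ + _).
  by rewrite big_ord_recl /= add0r.
rewrite mulrDl mul1r; apply: eqmD => //.
rewrite /Sk mulr_sumr big_ord_recr /=.
rewrite -[X in eqm _ X _]addr0; apply: eqmD.
  by apply: eqm_eq; apply: eq_bigr => m _; rewrite -exprD mulnS.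
rewrite -exprD -[X in eqm _ _ X]mulr1; apply: eqm_sym; apply: eqm_Xn0; nia.
Qed.

Lemma G_eqm N : eqm N (G N) (Pp N * Sp N).
Proof.
rewrite /G /Pp /Sp -big_split /=; apply: eqm_prod => k _; apply: gk_eqm.
Qed.

Lemma Cp_coef0 N : (Cp N)`_0 = 1.
Proof.
have h : eqm 0 (Cp N) 1 by apply: eqm_prod1 => i _; apply: eqm_1Xn.
by rewrite (h 0%N) // coef1.
Qed.

Lemma Gtheta N : eqm N (G N * theta R N) 1.
Proof.
apply: (@eqm_cancel _ _ (Cp N ^+ 2)).
  by rewrite expr2 coef0M Cp_coef0 mulr1.
have T : eqm N (theta R N) (Opoly R N ^+ 2 * qp 'X^2 N) := eqm_sym (@theta_eqm R N).
apply: (@eqm_trans _ _ _ (Cp N ^+ 2 * (Pp N * Sp N * (Opoly R N ^+ 2 * qp 'X^2 N)))).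
  by apply: eqmMl; apply: eqmM => //; apply: G_eqm.
apply: (@eqm_trans _ _ _ ((Pp N * Cp N) * (Cp N * Sp N) * (Opoly R N ^+ 2 * qp 'X^2 N))).
  by apply: eqm_eq; ring.
apply: (@eqm_trans _ _ _ (qp 'X^2 N * 1 * (Opoly R N ^+ 2 * qp 'X^2 N))).
  by apply: eqmMr; apply: eqmM; [apply: eqm_eq; apply: PC_D | apply: CS_1].
apply: (@eqm_trans _ _ _ (Cp (N + N) ^+ 2)).
  by apply: eqm_eq; rewrite -OD_C; ring.
by rewrite mulr1; apply: eqmX; apply: C_stab.
Qed.

Lemma prod_if (I : finType) (c : pred I) (e : I -> nat) :
  \prod_(i : I) (if c i then ('X^(e i) : P) else 0) =
  if [forall i, c i] then 'X^(\sum_i e i) else 0.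
Proof.
case: (boolP [forall i, c i]) => hc.
  rewrite (big_morph (fun n => ('X^n : P)) (fun m n => exprD _ m n) (expr0 _)).
  by apply: eq_bigr => i _; rewrite (forallP hc).
move: hc; rewrite negb_forall => /existsP [i hi].
by rewrite (bigD1 i) //= (negbTE hi) mul0r.
Qed.

Lemma count_coef N : (overpartition_count N)%:R = (G N)`_N :> R.
Proof.
rewrite /G /gk bigA_distr_bigA /= coef_sum.
under eq_bigr do rewrite prod_if (fun_if (fun p : P => p`_N)) coefXn coef0.
rewrite -[LHS]mulr1 /overpartition_count -sum1_card big_mkcond natr_sum /=.
rewrite mulr1; apply: eq_bigr => f _.
rewrite /is_overpartition inE /=.
by case: [forall _, _]; rewrite ?andbF ?andbT //= eq_sym; case: eqP.
Qed.
End Over.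

Section Pure.
Variable R : idomainType.
Local Notation P := {poly R}.
Definition pure (r : nat) (p : P) := forall i, (i %% 5 != r)%N -> p`_i = 0.

Lemma pureD r p q : pure r p -> pure r q -> pure r (p + q).
Proof. by move=> h1 h2 i hi; rewrite coefD h1 // h2 // addr0. Qed.
Lemma pureN r p : pure r p -> pure r (- p).
Proof. by move=> h i hi; rewrite coefN h // oppr0. Qed.
Lemma pureB r p q : pure r p -> pure r q -> pure r (p - q).
Proof. by move=> h1 h2; apply: pureD => //; apply: pureN. Qed.
Lemma pure0 r : pure r 0. Proof. by move=> i _; rewrite coef0. Qed.
Lemma pureM r s p q : pure r p -> pure s q -> pure ((r + s) %% 5) (p * q).
Proof.
move=> h1 h2 i hi; rewrite coefM big1 // => j _.
case: (boolP (j %% 5 == r)%N) => hj; last by rewrite h1 // mul0r.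
case: (boolP ((i - j) %% 5 == s)%N) => hij; last by rewrite h2 // mulr0.
move/eqP: hj => hj; move/eqP: hij => hij.
have hji : (j <= i)%N by have := ltn_ord j; lia.
by move: hi; rewrite -hj -hij modnDm subnKC // eqxx.
Qed.
Lemma pure_nat k : pure 0 (k%:R : P).
Proof.
move=> i hi; rewrite -polyC_natr coefC; case: eqP => // hi0; by rewrite hi0 mod0n in hi.
Qed.
Lemma pure_scale r p (k : nat) : pure r p -> pure r (k%:R * p).
Proof. by move=> h i hi; rewrite mulr_natl coefMn h // mul0rn. Qed.
Lemma pure_mod r p : pure r p -> pure (r %% 5) p.
Proof. by move=> h i hi; apply: h; apply: contra hi => /eqP <-; rewrite modn_mod. Qed.
Lemma pure_coef r p i : pure r p -> (i %% 5 != r)%N -> p`_i = 0.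
Proof. by move=> h; apply: h. Qed.
End Pure.

Section Dissect.
Variable R : idomainType.
Local Notation P := {poly R}.
Variable n : nat.
Local Notation I := 'I_(n + n).+1.

Definition dk (k : I) : nat := dd k n.
Definition sgn (k : I) : R := (-1) ^+ dk k.
Definition tsum (A : pred I) (e : nat -> nat) : P :=
  \sum_(k | A k) sgn k *: 'X^(e (dk k)).
Definition c0 (d : nat) : bool := (d %% 5 == 0)%N.
Definition c1 (d : nat) : bool := (d %% 5 == 1)%N || (d %% 5 == 4)%N.
Definition c2 (d : nat) : bool := (d %% 5 == 2)%N || (d %% 5 == 3)%N.
Definition ta := tsum (fun k => c0 (dk k)) (fun d => d ^ 2)%N.
Definition tb := tsum (fun k => c1 (dk k)) (fun d => d ^ 2)%N.
Definition tc := tsum (fun k => c2 (dk k)) (fun d => d ^ 2)%N.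
Definition tF := tsum predT (fun d => 5 * d ^ 2)%N.
Definition tF5 := tsum predT (fun d => 25 * d ^ 2)%N.

Lemma theta_tsum : theta R n = tsum predT (fun d => d ^ 2)%N.
Proof.
rewrite /theta /tsum; apply: eq_bigr => k _.
rewrite -mul_polyC rmorphXn rmorphN1 /sgn /dk; congr (_ * _).
rewrite -signr_odd -[RHS]signr_odd.
have h : ((k + n) %% 2 = dd k n %% 2)%N by rewrite /dd; lia.
by rewrite !modn2 in h; rewrite h.
Qed.

Lemma theta_abc : theta R n = ta + tb + tc.
Proof.
rewrite theta_tsum /tsum (bigID (fun k => c0 (dk k))) /= -addrA; congr (_ + _).
rewrite (bigID (fun k => c1 (dk k))) /=; congr (_ + _); apply: eq_bigl => k;
  rewrite /c0 /c1 /c2; set d := (dk k %% 5)%N; have : (d < 5)%N by rewrite ltn_mod.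
  by case: d => [|[|[|[|[|?]]]]].
by case: d => [|[|[|[|[|?]]]]].
Qed.

Lemma coef_tsum (A : pred I) e i : (tsum A e)`_i = \sum_(k | A k && (e (dk k) == i)) sgn k.
Proof. by rewrite /tsum coef_sumMXn. Qed.

Lemma pure_tsum (A : pred I) e r : (forall k, A k -> (e (dk k) %% 5 = r)%N) -> pure r (tsum A e).
Proof.
move=> h i hi; rewrite coef_tsum big_pred0 // => k.
case: (boolP (A k)) => //= hk; apply/negP => /eqP he.
by move: hi; rewrite -he h // eqxx.
Qed.

Lemma pure_a : pure 0 ta.
Proof. by apply: pure_tsum => k; rewrite /c0 -modnXm => /eqP ->. Qed.
Lemma pure_b : pure 1 tb.
Proof. by apply: pure_tsum => k; rewrite /c1 -modnXm => /orP [] /eqP ->. Qed.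
Lemma pure_c : pure 4 tc.
Proof. by apply: pure_tsum => k; rewrite /c2 -modnXm => /orP [] /eqP ->. Qed.
Lemma pure_F : pure 0 tF.
Proof. by apply: pure_tsum => k _; rewrite modnMr. Qed.

Lemma tsum_comp e : tsum predT e \Po 'X^5 = tsum predT (fun d => 5 * e d)%N.
Proof.
apply/polyP => i; rewrite coef_comp_poly_Xn // !coef_tsum.
case: (boolP (5 %| i)%N) => h.
  by apply: eq_bigl => k /=; apply/eqP/eqP; lia.
by rewrite big_pred0 // => k /=; apply/eqP; lia.
Qed.

Lemma thetaF : theta R n \Po 'X^5 = tF.
Proof. by rewrite theta_tsum tsum_comp. Qed.
Lemma FF5 : tF \Po 'X^5 = tF5.
Proof. by rewrite /tF tsum_comp /tsum; apply: eq_bigr => k _; rewrite mulnA. Qed.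

Hypothesis h5 : (5%:R : R) = 0.

Lemma frob_add (x y : P) : (x + y) ^+ 5 = x ^+ 5 + y ^+ 5.
Proof.
have -> : (x + y) ^+ 5 = x ^+ 5 + y ^+ 5 +
   5%:R * (x ^+ 4 * y + 2%:R * x ^+ 3 * y ^+ 2 + 2%:R * x ^+ 2 * y ^+ 3 + x * y ^+ 4).
  by ring.
by rewrite -polyC_natr h5 mul0r addr0.
Qed.

Lemma theta_frob : theta R n ^+ 5 = tF.
Proof.
rewrite theta_tsum /tsum /tF.
apply: (big_rec2 (fun x y => x ^+ 5 = y)) => [|k x y _ <-]; first by rewrite expr0n.
rewrite frob_add exprZn -exprM /sgn -exprM -[(-1) ^+ (dk k * 5)]signr_odd oddM andbT signr_odd.
by rewrite mulnC.
Qed.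
End Dissect.

Import Num.Theory.

Lemma sum_bij (R : nmodType) (T : finType) (P1 P2 : pred T) (f g : T -> T) (F1 F2 : T -> R) :
  (forall p, P1 p -> P2 (f p)) -> (forall q, P2 q -> P1 (g q)) ->
  (forall p, P1 p -> g (f p) = p) -> (forall q, P2 q -> f (g q) = q) ->
  (forall p, P1 p -> F2 (f p) = F1 p) ->
  \sum_(p | P1 p) F1 p = \sum_(q | P2 q) F2 q.
Proof.
move=> h12 h21 hgf hfg hF.
rewrite [RHS](reindex_onto f g) //=.
apply: eq_big => [p | p hp]; last by rewrite hF.
apply/idP/idP => [hp | /andP [hp /eqP <-]]; last exact: h21.
by apply/andP; split; [apply: h12 | rewrite hgf].
Qed.

Lemma I1 (x y : int) : (5 %| x - 2 * y)%Z ->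
  if c2 (absz x) then c1 (absz y) && c2 (absz x)
  else (c0 (absz x) && c0 (absz y)) || (c1 (absz x) && c2 (absz y)).
Proof. rewrite /c0 /c1 /c2 => h; case: ifP => hx; lia. Qed.
Lemma I2b (u v : int) : c2 (absz (2 * u - v)%R) -> ~~ (5 %| (u + 2 * v) - 2 * (2 * u - v))%Z.
Proof. rewrite /c2; lia. Qed.
Lemma sqa (x : int) : ((absz x) ^ 2)%:Z = x ^+ 2.
Proof. by rewrite -abszX abszE ger0_norm // sqr_ge0. Qed.
Lemma normmap (u v : int) :
  (absz (2 * u - v)%R ^ 2 + absz (u + 2 * v)%R ^ 2 = 5 * (absz u ^ 2 + absz v ^ 2))%N.
Proof.
apply/eqP; rewrite -eqz_nat PoszD PoszM PoszD !sqa; apply/eqP.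
have -> : Posz 5 = 5%:R by []. ring.
Qed.
Lemma sqle (a m : nat) : (a ^ 2 <= m)%N -> (a <= m)%N.
Proof. move=> h; apply: leq_trans h; case: a => // a; rewrite expnS expn1 leq_pmulr //. Qed.
Lemma back (x y : int) : (5 %| x - 2 * y)%Z ->
  x = 2 * divz (2 * x + y) 5 - divz (2 * y - x) 5 /\
  y = divz (2 * x + y) 5 + 2 * divz (2 * y - x) 5.
Proof. move=> h; split; lia. Qed.
Lemma par (u v : int) : (-1) ^+ (absz (2 * u - v)%R + absz (u + 2 * v)%R) =
   (-1) ^+ (absz u + absz v) :> int.
Proof.
rewrite -signr_odd -[RHS]signr_odd.
have h : ((absz (2*u - v)%R + absz (u + 2*v)%R) %% 2 = (absz u + absz v) %% 2)%N by lia.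
by rewrite !modn2 in h; rewrite h.
Qed.

Section Bij.
Variable R : idomainType.
Local Notation P := {poly R}.
Variable n : nat.
Local Notation I := 'I_(n + n).+1.

Definition z (k : I) : int := k%:Z - n%:Z.
Definition toI (x : int) : I := inord (absz (x + n%:Z)).
Lemma dk_z k : dk k = absz (z k). Proof. rewrite /dk /dd /z; lia. Qed.
Lemma z_bound k : (absz (z k) <= n)%N. Proof. have := ltn_ord k; rewrite /z; lia. Qed.
Lemma z_toI x : (absz x <= n)%N -> z (toI x) = x.
Proof. by move=> h; rewrite /z /toI inordK; lia. Qed.
Lemma toI_z k : toI (z k) = k.
Proof. have hk := ltn_ord k; apply: val_inj; rewrite /= /toI /z inordK; lia. Qed.
Lemma sgn_z k : sgn R k = (-1) ^+ absz (z k).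
Proof. by rewrite /sgn dk_z. Qed.
Lemma dk_toI x : (absz x <= n)%N -> dk (toI x) = absz x.
Proof. by move=> h; rewrite dk_z z_toI. Qed.
Lemma sgn_toI x : (absz x <= n)%N -> sgn R (toI x) = (-1) ^+ absz x.
Proof. by move=> h; rewrite sgn_z z_toI. Qed.

Lemma coef_tsum2 (A B : pred I) e f i :
  (tsum R A e * tsum R B f : P)`_i =
  \sum_(p : I * I | A p.1 && B p.2 && (e (dk p.1) + f (dk p.2) == i)%N) sgn R p.1 * sgn R p.2.
Proof.
rewrite /tsum mulr_suml; under eq_bigr do rewrite mulr_sumr.
rewrite pair_big /= coef_sum [RHS]big_mkcondr /=; apply: eq_bigr => p _.
rewrite -scalerAl -scalerAr scalerA coefZ -(exprD 'X) coefXn eq_sym.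
by case: eqP; rewrite ?mulr1 ?mulr0.
Qed.

Definition fmap (p : I * I) : I * I :=
  let u := z p.1 in let v := z p.2 in
  let x := (2 * u - v)%R in let y := (u + 2 * v)%R in
  if c2 (absz x) then (toI y, toI x) else (toI x, toI y).
Definition gmap (q : I * I) : I * I :=
  let x := z q.1 in let y := z q.2 in
  if (5 %| x - 2 * y)%Z then (toI (divz (2 * x + y) 5), toI (divz (2 * y - x) 5))
  else (toI (divz (2 * y + x) 5), toI (divz (2 * x - y) 5)).

Definition cls (q : I * I) : bool :=
  (c0 (dk q.1) && c0 (dk q.2)) || (c1 (dk q.1) && c2 (dk q.2)).

Lemma parn (u v : int) : odd (absz (2 * u - v)%R + absz (u + 2 * v)%R) = odd (absz u + absz v).
Proof.
have h : ((absz (2*u - v)%R + absz (u + 2*v)%R) %% 2 = (absz u + absz v) %% 2)%N by lia.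
by rewrite !modn2 in h; case: (odd _) h; case: (odd _).
Qed.

Lemma fmap_prop (k l : I) :
  let u := z k in let v := z l in let x := (2 * u - v)%R in let y := (u + 2 * v)%R in
  (absz x <= n)%N -> (absz y <= n)%N ->
  [/\ cls (fmap (k, l)),
      (dk (fmap (k, l)).1 ^ 2 + dk (fmap (k, l)).2 ^ 2 = absz x ^ 2 + absz y ^ 2)%N,
      sgn R (fmap (k, l)).1 * sgn R (fmap (k, l)).2 = sgn R k * sgn R l &
      gmap (fmap (k, l)) = (k, l)].
Proof.
move=> u v x y hx hy.
have hd : (5 %| x - 2 * y)%Z by rewrite /x /y; lia.
have hI := I1 hd.
have hs : sgn R k * sgn R l = (-1) ^+ (absz x + absz y).
  by rewrite !sgn_z -exprD -signr_odd parn signr_odd.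
rewrite /fmap -/u -/v -/x -/y hs; case: ifP => hc /=; rewrite hc in hI.
- rewrite /cls /= !dk_toI // !sgn_toI // -exprD; split.
  + by move: hI; rewrite andbT => ->; rewrite hc orbT.
  + by rewrite addnC.
  + by rewrite addnC.
  rewrite /gmap /= !z_toI //.
  have -> : (5 %| y - 2 * x)%Z = false by apply/negbTE; rewrite /x /y; apply: I2b.
  by rewrite /x /y /u /v; congr (_, _); [rewrite -[RHS]toI_z | rewrite -[RHS]toI_z]; congr toI; lia.
- rewrite /cls /= !dk_toI // !sgn_toI // -exprD; split => //.
  rewrite /gmap /= !z_toI // hd.
  by rewrite /x /y /u /v; congr (_, _); [rewrite -[RHS]toI_z | rewrite -[RHS]toI_z]; congr toI; lia.
Qed.

Lemma gmap_prop (k l : I) : cls (k, l) -> (dk k ^ 2 + dk l ^ 2 <= n)%N ->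
  (5 * dk (gmap (k, l)).1 ^ 2 + 5 * dk (gmap (k, l)).2 ^ 2 = dk k ^ 2 + dk l ^ 2)%N /\
  fmap (gmap (k, l)) = (k, l).
Proof.
rewrite /cls /= !dk_z => hc hn.
set x := z k in hc hn *; set y := z l in hc hn *.
rewrite /gmap /= -/x -/y.
case: ifP => h.
- have [ex ey] := back h.
  set u := divz (2 * x + y) 5 in ex ey *; set v := divz (2 * y - x) 5 in ex ey *.
  have nm := normmap u v; rewrite -ex -ey in nm.
  have hu : (absz u <= n)%N by apply: sqle; lia.
  have hv : (absz v <= n)%N by apply: sqle; lia.
  have hc2 : c2 (absz x) = false by move: hc; clear; rewrite /c0 /c1 /c2; lia.
  rewrite /= !z_toI // nm mulnDr; split => //.
  rewrite /fmap /= !z_toI // -ex -ey hc2.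
  by rewrite /x /y !toI_z.
- have h' : (5 %| y - 2 * x)%Z by move: hc h; clear; rewrite /c0 /c1 /c2; lia.
  have hc2 : c2 (absz y) = true by move: hc h; clear; rewrite /c0 /c1 /c2; lia.
  have [ey ex] := back h'.
  set u := divz (2 * y + x) 5 in ex ey *; set v := divz (2 * x - y) 5 in ex ey *.
  have nm := normmap u v; rewrite -ex -ey in nm.
  have hu : (absz u <= n)%N by apply: sqle; lia.
  have hv : (absz v <= n)%N by apply: sqle; lia.
  rewrite /= !z_toI // [RHS]addnC nm mulnDr; split => //.
  rewrite /fmap /= !z_toI // -ex -ey hc2.
  by rewrite /x /y !toI_z.
Qed.

Lemma keyC i : (i <= n)%N ->
  ((ta R n * ta R n + tb R n * tc R n) : P)`_i = (tF R n * tF R n : P)`_i.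
Proof.
move=> hi.
rewrite coefD /ta /tb /tc /tF !coef_tsum2 /=.
set W := fun p : I * I => sgn R p.1 * sgn R p.2.
have -> : \sum_(p : I * I | c0 (dk p.1) && c0 (dk p.2) && (dk p.1 ^ 2 + dk p.2 ^ 2 == i)%N) W p
  + \sum_(p : I * I | c1 (dk p.1) && c2 (dk p.2) && (dk p.1 ^ 2 + dk p.2 ^ 2 == i)%N) W p
  = \sum_(p : I * I | cls p && (dk p.1 ^ 2 + dk p.2 ^ 2 == i)%N) W p.
  rewrite [RHS](bigID (fun p : I * I => c0 (dk p.1) && c0 (dk p.2))) /=.
  congr (_ + _); apply: eq_bigl => p; rewrite /cls /c0 /c1 /c2.
    by case: (dk p.1 %% 5 == 0)%N; case: (dk p.2 %% 5 == 0)%N; rewrite ?andbF ?andbT ?andbF //=.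
  lia.
have bnd : forall k l : I, (5 * dk k ^ 2 + 5 * dk l ^ 2 == i)%N ->
   let x := absz (2 * z k - z l)%R in let y := absz (z k + 2 * z l)%R in
   [/\ (x <= n)%N, (y <= n)%N & (x ^ 2 + y ^ 2 = i)%N].
  move=> k l /eqP h x y; have nm := normmap (z k) (z l); rewrite -!dk_z in nm.
  split; try apply: sqle; rewrite /x /y; lia.
symmetry; apply: (sum_bij (f := fmap) (g := gmap)).
- move=> [k l] /= /bnd [hx hy hn].
  have [h1 h2 _ _] := fmap_prop hx hy.
  by rewrite h1 h2 hn eqxx.
- move=> [k l] /andP [hc /eqP hn].
  have hb : (dk k ^ 2 + dk l ^ 2 <= n)%N by rewrite hn.
  have [h1 _] := gmap_prop hc hb.
  by rewrite h1 hn.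
- move=> [k l] /= /bnd [hx hy hn].
  by have [_ _ _ ->] := fmap_prop hx hy.
- move=> [k l] /andP [hc /eqP hn].
  have hb : (dk k ^ 2 + dk l ^ 2 <= n)%N by rewrite hn.
  by have [_ ->] := gmap_prop hc hb.
- move=> [k l] /= /bnd [hx hy hn].
  by have [_ _ h3 _] := fmap_prop hx hy; rewrite /W h3.
Qed.

Lemma abs5 (u : int) : absz (5 * u)%R = (5 * absz u)%N.
Proof. lia. Qed.

Lemma keyA i : (i <= n)%N -> (ta R n : P)`_i = (tF5 R n : P)`_i.
Proof.
move=> hi; rewrite /ta /tF5 !coef_tsum /=.
symmetry; apply: (sum_bij (f := fun l => toI (5 * z l)) (g := fun k => toI (divz (z k) 5))).
- move=> l /eqP h.
  have hb : (absz (5 * z l)%R <= n)%N by apply: sqle; rewrite abs5 expnMn -dk_z; lia.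
  rewrite dk_toI // abs5 -dk_z expnMn /c0; apply/andP; split; [lia | apply/eqP; lia].
- move=> k /andP [hc /eqP h]; rewrite dk_z /c0 in hc h.
  have hb : (absz (divz (z k) 5) <= n)%N by have := z_bound k; lia.
  rewrite /= dk_toI //.
  have e : z k = (5 * divz (z k) 5)%R by lia.
  by rewrite -h {2}e abs5 expnMn.
- move=> l /eqP h.
  have hb : (absz (5 * z l)%R <= n)%N by apply: sqle; rewrite abs5 expnMn -dk_z; lia.
  rewrite z_toI //.
  have -> : divz (5 * z l) 5 = z l by lia.
  by rewrite toI_z.
- move=> k /andP [hc /eqP h]; rewrite dk_z /c0 in hc h.
  have hb : (absz (divz (z k) 5) <= n)%N by have := z_bound k; lia.
  rewrite z_toI //.
  have -> : (5 * divz (z k) 5)%R = z k by lia.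
  by rewrite toI_z.
- move=> l /eqP h.
  have hb : (absz (5 * z l)%R <= n)%N by apply: sqle; rewrite abs5 expnMn -dk_z; lia.
  rewrite sgn_toI // sgn_z -signr_odd -[RHS]signr_odd.
  have hp : ((absz (5 * z l)%R) %% 2 = (absz (z l)) %% 2)%N by lia.
  by rewrite !modn2 in hp; rewrite hp.
Qed.
End Bij.

Import Num.Theory.

Section PureX.
Variable R : idomainType.
Local Notation P := {poly R}.

Lemma pureX r (p : P) k : pure r p -> pure ((r * k) %% 5) (p ^+ k).
Proof.
move=> h; elim: k => [|k ih].
  rewrite expr0 muln0 mod0n => i hi; rewrite coef1; case: eqP => // e; by rewrite e in hi.
rewrite exprS; have := pureM h ih; rewrite modnDmr mulnS.
by [].
Qed.

Lemma pure_zero r s (p : P) i : pure r p -> (i %% 5 = s)%N -> (r %% 5 != s)%N -> p`_i = 0.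
Proof.
move=> h his hrs; apply: (pure_mod h); rewrite his; by rewrite eq_sym.
Qed.

Lemma avoidM (p q : P) : (forall i, (5 %| i)%N -> p`_i = 0) -> pure 0 q ->
  forall i, (5 %| i)%N -> (p * q)`_i = 0.
Proof.
move=> hp hq i hi; rewrite coefM big1 // => j _.
case: (boolP (5 %| j)%N) => hj; first by rewrite hp // mul0r.
rewrite hq ?mulr0 //; have := ltn_ord j; move: hi hj; rewrite /dvdn; lia.
Qed.

Lemma comp_polyXn_exp (p : P) k m : (p \Po 'X^m) ^+ k = p ^+ k \Po 'X^m.
Proof.
elim: k => [|k ih]; first by rewrite !expr0 comp_polyC.
by rewrite !exprS ih comp_polyM.
Qed.
End PureX.

Import Num.Theory.

Section Final.
Variable R : idomainType.
Local Notation P := {poly R}.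
Hypothesis h5 : (5%:R : R) = 0.
Variable N : nat.
Local Notation th := (theta R N).
Local Notation a := (ta R N).
Local Notation b := (tb R N).
Local Notation c := (tc R N).
Local Notation F := (tF R N).
Local Notation F5 := (tF5 R N).

Lemma h5P : (5%:R : P) = 0.
Proof. by rewrite -polyC_natr h5. Qed.

Lemma th0 : th`_0 = 1.
Proof.
rewrite -(theta_eqm R (n:=N) (i:=0)) //.
have h : eqm 0 (Opoly R N ^+ 2 * qp ('X^2 : P) N) 1.
  rewrite -(mulr1 1); apply: eqmM; first by rewrite -(expr1n _ 2); apply: eqmX;
    apply: eqm_prod1 => j _; apply: eqm_1Xn.
  by apply: eqm_prod1 => j _; rewrite -exprM; apply: eqm_1Xn; lia.
by rewrite (h 0%N) // coef1.
Qed.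

Lemma F0 : F`_0 = 1.
Proof. by rewrite -thetaF coef_comp_poly_Xn // th0. Qed.

Lemma pF : pure 0 F.
Proof. exact: pure_F. Qed.

Definition avr s (p : P) := forall i, (i %% 5 = s)%N -> p`_i = 0.
Lemma avrD s p q : avr s p -> avr s q -> avr s (p + q).
Proof. by move=> h1 h2 i hi; rewrite coefD h1 // h2 // addr0. Qed.
Lemma avr_pure s r p : pure r p -> (r %% 5 != s)%N -> avr s p.
Proof. by move=> h hr i hi; apply: pure_zero h hi hr. Qed.

Lemma th4_split : th ^+ 4 =
  (a * a + b * c) ^+ 2 + 5%:R * (2%:R * a ^+ 2 * b * c + b ^+ 2 * c ^+ 2)
  + ((4%:R * (a ^+ 3 * b) + 12%:R * (a * b ^+ 2 * c) + c ^+ 4)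
  + (6%:R * (a ^+ 2 * b ^+ 2) + 4%:R * (a * c ^+ 3) + 4%:R * (b ^+ 3 * c))
  + (6%:R * (a ^+ 2 * c ^+ 2) + 4%:R * (a * b ^+ 3) + 4%:R * (b * c ^+ 3))
  + (4%:R * (a ^+ 3 * c) + 12%:R * (a * b * c ^+ 2) + b ^+ 4)).
Proof. rewrite theta_abc; ring. Qed.

Lemma coef_th4 i : (5 %| i)%N -> (th ^+ 4)`_i = ((a * a + b * c) ^+ 2)`_i.
Proof.
move=> hi; have hi0 : (i %% 5 = 0)%N by apply/eqP.
have pa := pure_a R N; have pb := pure_b R N; have pc := pure_c R N.
have H : forall p : P, avr 0 p -> p`_i = 0 by move=> p hp; apply: hp.
rewrite th4_split h5P mul0r addr0 coefD [X in _ + X = _]H ?addr0 //.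
repeat apply: avrD.
- apply: (avr_pure (r:=1)) => //; apply: pure_scale; exact: (pureM (pureX (k:=3) pa) pb).
- apply: (avr_pure (r:=1)) => //; apply: pure_scale; exact: (pureM (pureM pa (pureX (k:=2) pb)) pc).
- apply: (avr_pure (r:=1)) => //; exact: (pureX (k:=4) pc).
- apply: (avr_pure (r:=2)) => //; apply: pure_scale; exact: (pureM (pureX (k:=2) pa) (pureX (k:=2) pb)).
- apply: (avr_pure (r:=2)) => //; apply: pure_scale; exact: (pureM pa (pureX (k:=3) pc)).
- apply: (avr_pure (r:=2)) => //; apply: pure_scale; exact: (pureM (pureX (k:=3) pb) pc).
- apply: (avr_pure (r:=3)) => //; apply: pure_scale; exact: (pureM (pureX (k:=2) pa) (pureX (k:=2) pc)).
- apply: (avr_pure (r:=3)) => //; apply: pure_scale; exact: (pureM pa (pureX (k:=3) pb)).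
- apply: (avr_pure (r:=3)) => //; apply: pure_scale; exact: (pureM pb (pureX (k:=3) pc)).
- apply: (avr_pure (r:=4)) => //; apply: pure_scale; exact: (pureM (pureX (k:=3) pa) pc).
- apply: (avr_pure (r:=4)) => //; apply: pure_scale; exact: (pureM (pureM pa pb) (pureX (k:=2) pc)).
- apply: (avr_pure (r:=4)) => //; exact: (pureX (k:=4) pb).
Qed.

Local Notation GG := (G R N).
Definition G0 : P := \poly_(i < size GG) (if (5 %| i)%N then GG`_i else 0).

Lemma pure_G0 : pure 0 G0.
Proof.
move=> i hi; rewrite coef_poly; case: ifP => // _.
by case: ifP => // hd; move: hi; rewrite /dvdn in hd; rewrite hd.
Qed.

Lemma coef_G0 i : (5 %| i)%N -> G0`_i = GG`_i.
Proof.
move=> hd; rewrite coef_poly hd; case: ltnP => // hs.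
by rewrite nth_default.
Qed.

Lemma av_diff i : (5 %| i)%N -> (GG - G0)`_i = 0.
Proof. by move=> hd; rewrite coefB coef_G0 // subrr. Qed.

Lemma E1 : eqm N (F * G0) (F * F ^+ 3).
Proof.
move=> i hi; case: (boolP (5 %| i)%N) => hd.
- have -> : F * G0 = GG * F - (GG - G0) * F by ring.
  rewrite coefB (avoidM av_diff pF) // subr0.
  have -> : GG * F = GG * th * th ^+ 4 by rewrite -(theta_frob N h5) exprS; ring.
  rewrite (eqmMr (th ^+ 4) (Gtheta R (N:=N))) // mul1r coef_th4 //.
  rewrite (eqmX 2 (keyC R (n:=N)) hi).
  by have -> : (F * F) ^+ 2 = F * F ^+ 3 by ring.
- have hi5 : (i %% 5 != 0)%N by rewrite /dvdn in hd.
  rewrite (pureM pF pure_G0) //.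
  have := pureM pF (pureX (k:=3) pF); rewrite /= => h; by rewrite h.
Qed.

Lemma E2 : eqm N G0 (F ^+ 3).
Proof. exact: (eqm_cancel F0 E1). Qed.

Lemma stage1 : (5 %| N)%N -> GG`_N = (th ^+ 3)`_(N %/ 5).
Proof.
move=> hd; rewrite -coef_G0 // (E2 (leqnn N)) -thetaF comp_polyXn_exp.
by rewrite coef_comp_poly_Xn // hd.
Qed.

Lemma th3_split : th ^+ 3 =
  a * (a * a + b * c) + 5%:R * (a * b * c)
  + ((3%:R * (a ^+ 2 * b) + 3%:R * (b ^+ 2 * c))
  + (3%:R * (a * b ^+ 2) + c ^+ 3)
  + (3%:R * (a * c ^+ 2) + b ^+ 3)
  + (3%:R * (a ^+ 2 * c) + 3%:R * (b * c ^+ 2))).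
Proof. rewrite theta_abc; ring. Qed.

Lemma th2_split : th * th =
  (a * a + 2%:R * (b * c)) + (2%:R * (a * b) + b ^+ 2 + c ^+ 2 + 2%:R * (a * c)).
Proof. rewrite theta_abc; ring. Qed.

Lemma th3_split1 : th ^+ 3 = 3%:R * (b * (a * a + b * c)) +
  ((a ^+ 3 + 6%:R * (a * b * c)) + (3%:R * (a * b ^+ 2) + c ^+ 3)
  + (3%:R * (a * c ^+ 2) + b ^+ 3)
  + (3%:R * (a ^+ 2 * c) + 3%:R * (b * c ^+ 2))).
Proof. rewrite theta_abc; ring. Qed.

Lemma th3_split4 : th ^+ 3 = 3%:R * (c * (a * a + b * c)) +
  ((a ^+ 3 + 6%:R * (a * b * c)) + (3%:R * (a * b ^+ 2) + c ^+ 3)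
  + (3%:R * (a * c ^+ 2) + b ^+ 3)
  + (3%:R * (a ^+ 2 * b) + 3%:R * (b ^+ 2 * c))).
Proof. rewrite theta_abc; ring. Qed.

Lemma coef_th3_0 i : (i %% 5 = 0)%N -> (th ^+ 3)`_i = (a * (a * a + b * c))`_i.
Proof.
move=> hi0; have pa := pure_a R N; have pb := pure_b R N; have pc := pure_c R N.
have H : forall p : P, avr 0 p -> p`_i = 0 by move=> p hp; apply: hp.
rewrite th3_split h5P mul0r addr0 coefD [X in _ + X = _]H ?addr0 //.
repeat apply: avrD.
- apply: (avr_pure (r:=1)) => //; apply: pure_scale; exact: (pureM (pureX (k:=2) pa) pb).
- apply: (avr_pure (r:=1)) => //; apply: pure_scale; exact: (pureM (pureX (k:=2) pb) pc).
- apply: (avr_pure (r:=2)) => //; apply: pure_scale; exact: (pureM pa (pureX (k:=2) pb)).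
- apply: (avr_pure (r:=2)) => //; exact: (pureX (k:=3) pc).
- apply: (avr_pure (r:=3)) => //; apply: pure_scale; exact: (pureM pa (pureX (k:=2) pc)).
- apply: (avr_pure (r:=3)) => //; exact: (pureX (k:=3) pb).
- apply: (avr_pure (r:=4)) => //; apply: pure_scale; exact: (pureM (pureX (k:=2) pa) pc).
- apply: (avr_pure (r:=4)) => //; apply: pure_scale; exact: (pureM pb (pureX (k:=2) pc)).
Qed.

Lemma coef_thth_0 i : (i %% 5 = 0)%N -> (F * (th * th))`_i = (F * (a * a + 2%:R * (b * c)))`_i.
Proof.
move=> hi0; have pa := pure_a R N; have pb := pure_b R N; have pc := pure_c R N.
have H : forall p : P, avr 0 p -> p`_i = 0 by move=> p hp; apply: hp.
rewrite th2_split mulrDr coefD [X in _ + X = _]H ?addr0 //.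
rewrite !mulrDr; repeat apply: avrD.
- apply: (avr_pure (r:=1)) => //; exact: (pureM pF (pure_scale 2 (pureM pa pb))).
- apply: (avr_pure (r:=2)) => //; exact: (pureM pF (pureX (k:=2) pb)).
- apply: (avr_pure (r:=3)) => //; exact: (pureM pF (pureX (k:=2) pc)).
- apply: (avr_pure (r:=4)) => //; exact: (pureM pF (pure_scale 2 (pureM pa pc))).
Qed.

Lemma coef_th3_1 i : (i %% 5 = 1)%N -> (th ^+ 3)`_i = (3%:R * (b * (a * a + b * c)))`_i.
Proof.
move=> hi0; have pa := pure_a R N; have pb := pure_b R N; have pc := pure_c R N.
have H : forall p : P, avr 1 p -> p`_i = 0 by move=> p hp; apply: hp.
rewrite th3_split1 coefD [X in _ + X = _]H ?addr0 //.
repeat apply: avrD.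
- apply: (avr_pure (r:=0)) => //; exact: (pureX (k:=3) pa).
- apply: (avr_pure (r:=0)) => //; apply: pure_scale; exact: (pureM (pureM pa pb) pc).
- apply: (avr_pure (r:=2)) => //; apply: pure_scale; exact: (pureM pa (pureX (k:=2) pb)).
- apply: (avr_pure (r:=2)) => //; exact: (pureX (k:=3) pc).
- apply: (avr_pure (r:=3)) => //; apply: pure_scale; exact: (pureM pa (pureX (k:=2) pc)).
- apply: (avr_pure (r:=3)) => //; exact: (pureX (k:=3) pb).
- apply: (avr_pure (r:=4)) => //; apply: pure_scale; exact: (pureM (pureX (k:=2) pa) pc).
- apply: (avr_pure (r:=4)) => //; apply: pure_scale; exact: (pureM pb (pureX (k:=2) pc)).
Qed.

Lemma coef_th3_4 i : (i %% 5 = 4)%N -> (th ^+ 3)`_i = (3%:R * (c * (a * a + b * c)))`_i.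
Proof.
move=> hi0; have pa := pure_a R N; have pb := pure_b R N; have pc := pure_c R N.
have H : forall p : P, avr 4 p -> p`_i = 0 by move=> p hp; apply: hp.
rewrite th3_split4 coefD [X in _ + X = _]H ?addr0 //.
repeat apply: avrD.
- apply: (avr_pure (r:=0)) => //; exact: (pureX (k:=3) pa).
- apply: (avr_pure (r:=0)) => //; apply: pure_scale; exact: (pureM (pureM pa pb) pc).
- apply: (avr_pure (r:=2)) => //; apply: pure_scale; exact: (pureM pa (pureX (k:=2) pb)).
- apply: (avr_pure (r:=2)) => //; exact: (pureX (k:=3) pc).
- apply: (avr_pure (r:=3)) => //; apply: pure_scale; exact: (pureM pa (pureX (k:=2) pc)).
- apply: (avr_pure (r:=3)) => //; exact: (pureX (k:=3) pb).
- apply: (avr_pure (r:=1)) => //; apply: pure_scale; exact: (pureM (pureX (k:=2) pa) pb).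
- apply: (avr_pure (r:=1)) => //; apply: pure_scale; exact: (pureM (pureX (k:=2) pb) pc).
Qed.

Lemma coef_thFF_1 i : (i %% 5 = 1)%N -> (th * (F * F))`_i = (b * (F * F))`_i.
Proof.
move=> hi0; have pa := pure_a R N; have pb := pure_b R N; have pc := pure_c R N.
have H : forall p : P, avr 1 p -> p`_i = 0 by move=> p hp; apply: hp.
rewrite theta_abc !mulrDl !coefD [X in X + _ + _ = _]H ?add0r; last first.
  by apply: (avr_pure (r:=0)) => //; exact: (pureM pa (pureM pF pF)).
rewrite [X in _ + X = _]H ?addr0 //.
by apply: (avr_pure (r:=4)) => //; exact: (pureM pc (pureM pF pF)).
Qed.

Lemma coef_thFF_4 i : (i %% 5 = 4)%N -> (th * (F * F))`_i = (c * (F * F))`_i.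
Proof.
move=> hi0; have pa := pure_a R N; have pb := pure_b R N; have pc := pure_c R N.
have H : forall p : P, avr 4 p -> p`_i = 0 by move=> p hp; apply: hp.
rewrite theta_abc !mulrDl !coefD [X in X + _ + _ = _]H ?add0r; last first.
  by apply: (avr_pure (r:=0)) => //; exact: (pureM pa (pureM pF pF)).
rewrite [X in X + _ = _]H ?add0r //.
by apply: (avr_pure (r:=1)) => //; exact: (pureM pb (pureM pF pF)).
Qed.

Lemma coef_nat k (p : P) i : (k%:R * p)`_i = k%:R * p`_i.
Proof. by rewrite mulr_natl coefMn mulr_natl. Qed.

Lemma stage2 m : N = (125 * m)%N -> (m %% 5 = 1 \/ m %% 5 = 4)%N ->
  (th ^+ 3)`_(25 * m) = 0.
Proof.
move=> eN hm.
have hM : (25 * m <= N)%N by lia.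
have hM5 : (5 * m <= N)%N by lia.
have hM1 : (m <= N)%N by lia.
rewrite coef_th3_0; last by lia.
rewrite (eqmMl a (keyC R (n:=N))) // (eqmMr (F * F) (keyA R (n:=N))) //.
have -> : F5 * (F * F) = (F * (th * th)) \Po 'X^5.
  by rewrite !comp_polyM thetaF FF5.
rewrite coef_comp_poly_Xn //; have -> : (5 %| 25 * m)%N by apply/dvdnP; exists (5 * m)%N; lia.
have -> : (25 * m %/ 5 = 5 * m)%N by lia.
rewrite coef_thth_0; last by lia.
have -> : F * (a * a + 2%:R * (b * c)) = 2%:R * (F * (a * a + b * c)) - F * (a * a) by ring.
rewrite coefB coef_nat (eqmMl F (keyC R (n:=N))) //.
rewrite (eqmMl F (eqmM (keyA R (n:=N)) (keyA R (n:=N)))) //.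
have -> : (F * (F * F))`_(5 * m) = ((th * (th * th)) \Po 'X^5)`_(5 * m).
  by rewrite !comp_polyM thetaF.
have -> : (F * (F5 * F5))`_(5 * m) = ((th * (F * F)) \Po 'X^5)`_(5 * m).
  by rewrite !comp_polyM thetaF FF5.
rewrite !coef_comp_poly_Xn // dvdn_mulr // mulKn //.
have -> : th * (th * th) = th ^+ 3 by rewrite !exprS expr0 mulr1.
case: hm => hm.
- rewrite coef_th3_1 // coef_thFF_1 // coef_nat.
  rewrite (eqmMl b (keyC R (n:=N))) //.
  have -> : (2%:R * (3%:R * (b * (F * F))`_m) - (b * (F * F))`_m : R)
          = 5%:R * (b * (F * F))`_m by ring.
  by rewrite h5 mul0r.
- rewrite coef_th3_4 // coef_thFF_4 // coef_nat.
  rewrite (eqmMl c (keyC R (n:=N))) //.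
  have -> : (2%:R * (3%:R * (c * (F * F))`_m) - (c * (F * F))`_m : R)
          = 5%:R * (c * (F * F))`_m by ring.
  by rewrite h5 mul0r.
Qed.
End Final.


Lemma Fp5_5 : (5%:R : 'F_5) = 0.
Proof. by rewrite -(Fp_nat_mod (isT : prime 5) 5) modnn. Qed.

Lemma main_aux (m : nat) : (m %% 5 = 1 \/ m %% 5 = 4)%N ->
  (overpartition_count (125 * m) %% 5 = 0)%N.
Proof.
move=> hm.
have h := count_coef 'F_5 (125 * m).
rewrite (stage1 Fp5_5) in h; last by apply/dvdnP; exists (25 * m)%N; lia.
have e : (125 * m %/ 5 = 25 * m)%N by lia.
rewrite e (stage2 Fp5_5 (m := m)) // in h.
have := congr1 (@nat_of_ord _) h; by rewrite (@val_Fp_nat 5).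
Qed.

Local Close Scope ring_scope.

Theorem mainTheorem10 (n : nat) :
  overpartition_count (5 ^ 3 * (5 * n + 1)) %% 5 = 0 /\
  (0 < n -> overpartition_count (5 ^ 3 * (5 * n - 1)) %% 5 = 0).
Proof.
split.
- by apply: main_aux; left; lia.
- by move=> hn; apply: main_aux; right; lia.
Qed.
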